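(* Let $p$ be a prime and $k,\ell$ integers with $k>0$, $\ell\ge 0$; put $q=p^k$ and $Q=p^{\ell}$. Then the following are equivalent: (1) $\gcd(q-1,Q+1)=1$, or equivalently $p=2$ and $\operatorname{ord}_2(k)\le\operatorname{ord}_2(\ell)$; (2) $f_1(X)=X^{q^2Q+q}+X^{qQ+q^2}+X^{Q+1}$ permutes $\mathbb{F}_{q^3}$; (3) $f_2(X)=X^{q^2Q+1}+X^{qQ+1}+X^{Q+q^2}+X^{Q+q}-X^{Q+1}$ permutes $\mathbb{F}_{q^3}$; (4) $f_3(X)=X^{q^2Q+q}+X^{qQ+q}+X^{Q+q^2}-X^{Q+q}+X^{Q+1}$ permutes $\mathbb{F}_{q^3}$; (5) $f_4(X)=X^{q^2Q+q^2}+X^{qQ+q^2}-X^{Q+q^2}+X^{Q+q}+X^{Q+1}$ permutes $\mathbb{F}_{q^3}$.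
   Context: A polynomial permutes $\mathbb{F}_{q^3}$ if the induced map $\mathbb{F}_{q^3}\to\mathbb{F}_{q^3}$ is a bijection. For a nonzero integer $N$, $\operatorname{ord}_2(N)$ is the largest integer $s\ge0$ with $2^s\mid N$, and $\operatorname{ord}_2(0)=\infty$. *)

(* Defs.v *)
From HB Require Import structures.
From mathcomp Require Import all_boot all_order all_algebra all_field.
Set Implicit Arguments. Unset Strict Implicit. Unset Printing Implicit Defensive.
Import GRing.Theory.
Local Open Scope ring_scope.

Definition permutes (F : finFieldType) (f : {poly F}) : Prop :=
  bijective (fun x : F => f.[x]).

(* 2-adic valuation with ord_2(0) = infinity:  None encodes infinity. *)
Definition ord2 (n : nat) : option nat :=
  if n == 0%N then None else Some (logn 2 n).

Definition ord_le (a b : option nat) : Prop :=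
  match a, b with
  | _, None => True
  | None, Some _ => False
  | Some x, Some y => (x <= y)%N
  end.

Section Polys.
Variables (F : finFieldType) (q Q : nat).
Definition f1 : {poly F} := 'X^(q^2*Q + q) + 'X^(q*Q + q^2) + 'X^(Q + 1).
Definition f2 : {poly F} :=
  'X^(q^2*Q + 1) + 'X^(q*Q + 1) + 'X^(Q + q^2) + 'X^(Q + q) - 'X^(Q + 1).
Definition f3 : {poly F} :=
  'X^(q^2*Q + q) + 'X^(q*Q + q) + 'X^(Q + q^2) - 'X^(Q + q) + 'X^(Q + 1).
Definition f4 : {poly F} :=
  'X^(q^2*Q + q^2) + 'X^(q*Q + q^2) - 'X^(Q + q^2) + 'X^(Q + q) + 'X^(Q + 1).
End Polys.

(* Main.v *)
Set Warnings "-notation-overridden -ambiguous-paths -redundant-canonical-projection".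
Require Import Defs.
From HB Require Import structures.
From mathcomp Require Import all_boot all_order all_algebra all_field.
From mathcomp Require Import zify ring.
From mathcomp Require cyclic.
Lemma dvd_sub1 (y c : nat) : 0 < y -> (y - 1 %| y ^ c - 1)%N.
Proof.
move=> y0; rewrite -eqn_mod_dvd ?expn_gt0 ?y0 //.
have hy : y = 1 %[mod y - 1] by rewrite -{1}(subnK y0) modnDl.
by rewrite -modnXm hy modnXm exp1n.
Qed.

Lemma dvd_add1 (x o : nat) : odd o -> (x + 1 %| x ^ o + 1)%N.
Proof.
move=> oo; have -> : o = (2 * o./2).+1 by rewrite mul2n -[in LHS](odd_double_half o) oo.
have hx : x ^ 2 = 1 %[mod x + 1].
  case: x => [|x] //; apply/eqP; rewrite eqn_mod_dvd ?expn_gt0 //.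
  have -> : (x.+1 ^ 2 - 1 = (x.+1 - 1) * (x.+1 + 1))%N by rewrite -subn_sqr exp1n.
  exact: dvdn_mull.
rewrite expnS expnM /dvdn -modnDml -modnMmr -modnXm hx.
by rewrite modnXm exp1n modnMmr muln1 modnDml modnn.
Qed.

Lemma pow_mod_gcd (g x a b : nat) : 0 < a -> x ^ a = 1 %[mod g] ->
  x ^ b = 1 %[mod g] -> x ^ gcdn a b = 1 %[mod g].
Proof.
move=> a0 ha hb; case: (egcdnP b a0) => km kn def _.
have h1 : x ^ (km * a) = 1 %[mod g] by rewrite mulnC expnM -modnXm ha modnXm exp1n.
have h2 : x ^ (kn * b) = 1 %[mod g] by rewrite mulnC expnM -modnXm hb modnXm exp1n.
have e : x ^ (km * a) = x ^ (kn * b) * x ^ gcdn a b by rewrite def expnD.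
by rewrite -h1 e -modnMml h2 modnMml mul1n.
Qed.

Lemma logn2_2 : logn 2 2 = 1.
Proof. by rewrite logn_prime. Qed.

Lemma logn_odd (r : nat) : odd r -> logn 2 r = 0.
Proof.
move=> hr; apply/eqP; rewrite -leqn0 leqNgt logn_gt0 mem_primes /= dvdn2 hr.
by rewrite andbF.
Qed.

Lemma gcd_pow2_1 (m l : nat) : 0 < m -> (l = 0 \/ logn 2 m <= logn 2 l) ->
  gcdn (2^m - 1) (2^l + 1) = 1.
Proof.
move=> m0 hl.
have godd : odd (gcdn (2^m - 1) (2^l + 1)).
  apply: (dvdn_odd (dvdn_gcdl _ _)).
  by rewrite oddB ?expn_gt0 // oddX orbF; case: (m) m0.
have g2 : gcdn (2^m - 1) (2^l + 1) %| 2.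
  have [->|l0] := posnP l; first exact: dvdn_gcdr.
  have {}hl : logn 2 m <= logn 2 l by case: hl => // h; move: l0; rewrite h.
  set g := gcdn _ _.
  have h1 : 2^m = 1 %[mod g] by apply/eqP; rewrite eqn_mod_dvd ?expn_gt0 // dvdn_gcdl.
  have h2 : 2^(2 * l) = 1 %[mod g].
    apply/eqP; rewrite eqn_mod_dvd ?expn_gt0 // mulnC expnM.
    have -> : ((2^l)^2 - 1 = (2^l - 1) * (2^l + 1))%N by rewrite -subn_sqr exp1n.
    exact/dvdn_mull/dvdn_gcdr.
  have h3 := @pow_mod_gcd _ _ _ _ m0 h1 h2.
  set e := gcdn m (2 * l) in h3.
  have e0 : 0 < e by rewrite gcdn_gt0 m0.
  have el : e %| l.
    have e2l : e %| 2 * l := dvdn_gcdr _ _.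
    have er := divnK e2l; set r := (2 * l) %/ e in er.
    case ro: (odd r).
      have : logn 2 (r * e) = logn 2 (2 * l) by rewrite er.
      have r0 : 0 < r by case: (r) ro.
      rewrite !lognM // logn2_2 logn_odd // add0n.
      have := dvdn_leq_log 2 m0 (dvdn_gcdl m (2 * l)); rewrite -/e.
      by move=> h he; move: (leq_trans h hl); rewrite he add1n ltnn.
    have : 2 %| r by rewrite dvdn2 ro.
    move/divnK => rr; move: er; rewrite -rr mulnAC mulnC => /eqP.
    by rewrite eqn_mul2l /= => /eqP <-; apply: dvdn_mull.
  have h4 : 2^l = 1 %[mod g].
    by rewrite -(divnK el) mulnC expnM -modnXm h3 modnXm exp1n.
  have h5 : (2^l + 1) %% g = 0 by apply/eqP; rewrite -/(dvdn _ _) dvdn_gcdr.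
  by rewrite /dvdn -modnDml h4 modnDml in h5; rewrite /dvdn h5.
move: godd g2; case: (gcdn _ _) => [|[|[|n]]] //.
Qed.

Lemma gcd_pow2_2 (m l : nat) : 0 < m -> 0 < l -> logn 2 l < logn 2 m ->
  gcdn (2^m - 1) (2^l + 1) != 1.
Proof.
move=> m0 l0 hlt; set w := logn 2 l.
have wl : 2 ^ w %| l := pfactor_dvdnn 2 l.
set o := l %/ 2 ^ w.
have lo : l = 2 ^ w * o by rewrite mulnC divnK.
have oo : odd o.
  case/boolP: (odd o) => // /negbTE ho; have o2 : 2 %| o by rewrite dvdn2 ho.
  have : 2 ^ w.+1 %| l by rewrite lo expnSr dvdn_pmul2l ?expn_gt0.
  by rewrite pfactor_dvdn // ltnn.
set x := 2 ^ (2 ^ w).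
have D1 : x + 1 %| 2 ^ l + 1 by rewrite lo expnM dvd_add1.
have wm : 2 ^ w.+1 %| m by rewrite pfactor_dvdn.
have D2 : x + 1 %| 2 ^ m - 1.
  have -> : 2 ^ m = (x ^ 2) ^ (m %/ 2 ^ w.+1) by rewrite /x -!expnM mulnA -expnSr mulnC divnK.
  apply: (dvdn_trans _ (dvd_sub1 _ _ _)); last by rewrite expn_gt0 /x expn_gt0.
  have -> : (x ^ 2 - 1 = (x - 1) * (x + 1))%N by rewrite -subn_sqr exp1n.
  exact: dvdn_mull.
apply/eqP => h; have : x + 1 %| gcdn (2 ^ m - 1) (2 ^ l + 1) by rewrite dvdn_gcd D2 D1.
rewrite h dvdn1 addn1 eqSS.
by rewrite /x expn_eq0.
Qed.

Set Implicit Arguments. Unset Strict Implicit. Unset Printing Implicit Defensive.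
Import GRing.Theory.
Local Open Scope ring_scope.

Lemma c2eq (R : comPzRingType) (h2 : 1 + 1 = 0 :> R) (L R' W : R) :
  L = R' + (1 + 1) * W -> L = R'.
Proof. by rewrite h2 mul0r addr0. Qed.

Lemma addcc (R : comPzRingType) (h2 : 1 + 1 = 0 :> R) (x : R) : x + x = 0.
Proof. by rewrite -[x]mul1r -mulrDl h2 mul0r. Qed.

Lemma oppc2 (R : comPzRingType) (h2 : 1 + 1 = 0 :> R) (x : R) : - x = x.
Proof. by apply/eqP; rewrite eq_sym -subr_eq0 opprK addcc. Qed.

Lemma sqD2 (R : comPzRingType) (h2 : 1 + 1 = 0 :> R) (x y : R) :
  (x + y) ^+ 2 = x ^+ 2 + y ^+ 2.
Proof. by apply: (c2eq h2 (W := x * y)); ring. Qed.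

Lemma frob2 (R : comPzRingType) (h2 : 1 + 1 = 0 :> R) (n : nat) (x y : R) :
  (x + y) ^+ (2 ^ n) = x ^+ (2 ^ n) + y ^+ (2 ^ n).
Proof.
elim: n => [|n IH]; first by rewrite !expr1.
by rewrite expnSr !exprM IH sqD2.
Qed.

Section RRdef.
Variable F : fieldType.
Definition RR := (F * F)%type.
HB.instance Definition _ := GRing.Zmodule.on RR.
Definition rmul (x y : RR) : RR :=
  (x.1 * y.1 - x.2 * y.2, x.1 * y.2 + x.2 * y.1 - x.2 * y.2).
Definition rone : RR := (1, 0).
Lemma rmulA : associative rmul.
Proof. by move=> [a b] [c d] [e f]; rewrite /rmul /=; congr pair; ring. Qed.
Lemma rmulC : commutative rmul.
Proof. by move=> [a b] [c d]; rewrite /rmul /=; congr pair; ring. Qed.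
Lemma rmul1 : left_id rone rmul.
Proof. by move=> [a b]; rewrite /rmul /=; congr pair; ring. Qed.
Lemma rmulD : left_distributive rmul +%R.
Proof.
move=> [a b] [c d] [e f]; rewrite /rmul /=.
by apply/eqP; rewrite xpair_eqE /=; apply/andP; split; apply/eqP; ring.
Qed.
Lemma rone0 : rone != 0.
Proof. by apply/eqP => -[] /eqP; rewrite oner_eq0. Qed.
HB.instance Definition _ := GRing.Zmodule_isComNzRing.Build RR rmulA rmulC rmul1 rmulD rone0.
Lemma RRmulE (x y : RR) : x * y = rmul x y. Proof. by []. Qed.

Hypothesis h2 : 1 + 1 = 0 :> F.

Lemma Rsq (a b : F) : ((a, b) : RR) ^+ 2 = (a ^+ 2 + b ^+ 2, b ^+ 2).
Proof.
rewrite expr2 RRmulE /rmul /=; congr pair.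
  by apply: (c2eq h2 (W := - (b * b))); ring.
by apply: (c2eq h2 (W := a * b - b * b)); ring.
Qed.

Lemma Rpow2 (j : nat) (a b : F) : ((a, b) : RR) ^+ (2 ^ j) =
  if odd j then (a ^+ (2 ^ j) + b ^+ (2 ^ j), b ^+ (2 ^ j)) else (a ^+ (2 ^ j), b ^+ (2 ^ j)).
Proof.
elim: j => [|j IH]; first by rewrite expn0 !expr1.
rewrite expnSr exprM IH /=; case: (odd j) => /=; rewrite Rsq -!exprM //.
by rewrite sqD2 // -!exprM -addrA (addcc h2) addr0.
Qed.

Lemma RQ (j : nat) (a b : F) : ~~ odd j -> ((a, b) : RR) ^+ (2 ^ j + 1) =
  (a * a ^+ (2 ^ j) + b * b ^+ (2 ^ j),
   a * b ^+ (2 ^ j) + b * a ^+ (2 ^ j) + b * b ^+ (2 ^ j)).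
Proof.
move=> ej; rewrite addn1 exprSr Rpow2 (negbTE ej) RRmulE /rmul /=; congr pair.
  by apply: (c2eq h2 (W := - (b * b ^+ (2 ^ j)))); ring.
by apply: (c2eq h2 (W := - (b * b ^+ (2 ^ j)))); ring.
Qed.
End RRdef.

Lemma pow_iter (R : pzRingType) (r : R) (N j : nat) : (0 < N)%N -> r ^+ N = r ->
  r ^+ (j * N.-1 + 1) = r.
Proof.
move=> N0 hr; elim: j => [|j IH]; first by rewrite mul0n add0n expr1.
by rewrite mulSn -addnA exprD IH -exprSr prednK.
Qed.

Lemma pow_inj (R : pzRingType) (r s : R) (N e : nat) : (0 < N)%N -> coprime e N.-1 ->
  (0 < e)%N -> r ^+ N = r -> s ^+ N = s -> r ^+ e = s ^+ e -> r = s.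
Proof.
move=> N0 co e0 hr hs he; case: (egcdnP N.-1 e0) => km kn def _.
rewrite (eqP co) in def.
by rewrite -(pow_iter kn N0 hr) -(pow_iter kn N0 hs) -def mulnC !exprM he.
Qed.

Lemma logn2_odd_mul (k m : nat) : odd m -> (0 < k)%N -> logn 2 (k * m) = logn 2 k.
Proof.
move=> om k0; have m0 : (0 < m)%N by case: (m) om.
by rewrite lognM // (logn_odd _ om) addn0.
Qed.

Lemma choose_exps (k l : nat) : (0 < k)%N -> gcdn (2^k - 1) (2^l + 1) = 1%N ->
  exists l' M, [/\ ~~ odd l', (l' = l \/ l' = l + k * 3)%N, ~~ odd M && (0 < M)%N,
     (k * 3 %| M)%N & gcdn (2^M - 1) (2^l' + 1) = 1%N].
Proof.
move=> k0 hg.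
have hv : (l = 0 \/ logn 2 k <= logn 2 l)%N.
  have [->|l0] := posnP l; [by left | right].
  rewrite leqNgt; apply/negP => hlt.
  by move: (gcd_pow2_2 _ _ k0 l0 hlt); rewrite hg.
have ev2 (n : nat) : (0 < n)%N -> ~~ odd n -> (1 <= logn 2 n)%N.
  by move=> n0 en; rewrite -(pfactor_dvdn 1 _ n0) // expn1 dvdn2.
case ko : (odd k).
  exists (if odd l then l + k * 3 else l)%N, (k * 6)%N.
  have lg : logn 2 (k * 6) = 1%N.
    have -> : (k * 6 = (k * 3) * 2)%N by rewrite -mulnA.
    by rewrite lognM ?muln_gt0 ?k0 // logn2_odd_mul // (logn_odd _ ko) logn2_2.
  split.
  - by case lo : (odd l); rewrite ?oddD ?oddM ?lo ?ko.
  - by case: (odd l); [right | left].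
  - by rewrite oddM andbF muln_gt0 k0.
  - by rewrite (_ : k * 6 = (k * 3) * 2)%N; [apply: dvdn_mulr | rewrite -mulnA].

  apply: gcd_pow2_1 _ _ _; first by rewrite muln_gt0 k0.
  set l' := (if _ then _ else _).
  have el' : ~~ odd l' by rewrite /l'; case lo : (odd l); rewrite ?oddD ?oddM ?lo ?ko.
  have [->|l0] := posnP l'; [by left | right].
  by rewrite lg ev2.
exists l, (k * 3)%N.
have lg : logn 2 (k * 3) = logn 2 k by rewrite logn2_odd_mul.
have el : ~~ odd l.
  have [->|l0] := posnP l; first by [].
  case: hv => [l00|hv]; first by move: l0; rewrite l00.
  have k1 : (1 <= logn 2 k)%N by rewrite ev2 ?ko.
  have := leq_trans k1 hv; rewrite -(pfactor_dvdn 1 _ l0) // expn1 dvdn2.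
  by move/negbTE => ->.
split => //.
- by left.
- by rewrite oddM ko muln_gt0 k0.
apply: gcd_pow2_1 _ _ _; first by rewrite muln_gt0 k0.
by rewrite lg.
Qed.


Lemma core (F : finFieldType) (k l : nat) (E : F -> F -> F -> F -> F -> F -> F)
    (U : F -> F -> F -> F -> F) :
  (0 < k)%N -> #|F| = ((2 ^ k) ^ 3)%N -> gcdn (2 ^ k - 1) (2 ^ l + 1) = 1%N ->
  1 + 1 = 0 :> F ->
  (forall x0 x1 x2 y0 y1 y2, E x0 x1 x2 y0 y1 y2 =
     (x0 + x1 + x2) * (y0 + y1 + y2) + U (x1 + x2) (x2 + x0) (y1 + y2) (y2 + y0)) ->
  (forall n x0 x1 x2 y0 y1 y2, (E x0 x1 x2 y0 y1 y2) ^+ (2 ^ n) =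
     E (x0 ^+ (2 ^ n)) (x1 ^+ (2 ^ n)) (x2 ^+ (2 ^ n))
       (y0 ^+ (2 ^ n)) (y1 ^+ (2 ^ n)) (y2 ^+ (2 ^ n))) ->
  (forall x0 x1 x2 y0 y1 y2 x0' x1' x2' y0' y1' y2',
     E x0 x1 x2 y0 y1 y2 = E x0' x1' x2' y0' y1' y2' ->
     E x1 x2 x0 y1 y2 y0 = E x1' x2' x0' y1' y2' y0' ->
     E x2 x0 x1 y2 y0 y1 = E x2' x0' x1' y2' y0' y1' ->
     (x1 + x2) * (y1 + y2) + (x2 + x0) * (y2 + y0) =
       (x1' + x2') * (y1' + y2') + (x2' + x0') * (y2' + y0') /\
     (x1 + x2) * (y2 + y0) + (x2 + x0) * (y1 + y2) + (x2 + x0) * (y2 + y0) =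
       (x1' + x2') * (y2' + y0') + (x2' + x0') * (y1' + y2') + (x2' + x0') * (y2' + y0')) ->
  injective (fun x : F => E x (x ^+ (2 ^ k)) (x ^+ ((2 ^ k) ^ 2)) (x ^+ (2 ^ l))
                 ((x ^+ (2 ^ k)) ^+ (2 ^ l)) ((x ^+ ((2 ^ k) ^ 2)) ^+ (2 ^ l))).
Proof.
move=> k0 cF hg h2 hs hE hXY x x' /= exx'.
have qF (z : F) : z ^+ ((2 ^ k) ^ 3) = z by rewrite -cF expf_card.
have [l' [M [el' hl' /andP[eM M0] M3 hgM]]] := choose_exps k0 hg.
have QQ' (z : F) : z ^+ (2 ^ l') = z ^+ (2 ^ l).
  by case: hl' => ->; rewrite // expnD expnM exprM qF.
have FM (z : F) : z ^+ (2 ^ M) = z.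
  case/dvdnP: M3 => j ->; rewrite mulnC expnM expnM.
  by elim: j => [|j IH]; rewrite ?expr1 // expnS exprM qF IH.
have RM (r : RR F) : r ^+ (2 ^ M) = r.
  by case: r => a b; rewrite Rpow2 // (negbTE eM) !FM.
have s1 (z : F) : (z ^+ (2 ^ k)) ^+ (2 ^ k) = z ^+ ((2 ^ k) ^ 2) by rewrite -exprM mulnn.
have s2 (z : F) : (z ^+ ((2 ^ k) ^ 2)) ^+ (2 ^ k) = z by rewrite -exprM -expnSr qF.
have sQ (z : F) : (z ^+ (2 ^ l)) ^+ (2 ^ k) = (z ^+ (2 ^ k)) ^+ (2 ^ l) by rewrite exprAC.
have e1 := congr1 (fun z => z ^+ (2 ^ k)) exx'; rewrite /= !hE !sQ !s1 !s2 in e1.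
have e2 := congr1 (fun z => z ^+ (2 ^ k)) e1; rewrite /= !hE !sQ !s1 !s2 in e2.
have [hX hY] := hXY _ _ _ _ _ _ _ _ _ _ _ _ exx' e1 e2.
have Rz (z : F) : ((z ^+ (2 ^ k) + z ^+ ((2 ^ k) ^ 2), z ^+ ((2 ^ k) ^ 2) + z) : RR F)
     ^+ (2 ^ l' + 1) =
   ((z ^+ (2 ^ k) + z ^+ ((2 ^ k) ^ 2)) * ((z ^+ (2 ^ k)) ^+ (2 ^ l) + (z ^+ ((2 ^ k) ^ 2)) ^+ (2 ^ l))
    + (z ^+ ((2 ^ k) ^ 2) + z) * ((z ^+ ((2 ^ k) ^ 2)) ^+ (2 ^ l) + z ^+ (2 ^ l)),
    (z ^+ (2 ^ k) + z ^+ ((2 ^ k) ^ 2)) * ((z ^+ ((2 ^ k) ^ 2)) ^+ (2 ^ l) + z ^+ (2 ^ l))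
    + (z ^+ ((2 ^ k) ^ 2) + z) * ((z ^+ (2 ^ k)) ^+ (2 ^ l) + (z ^+ ((2 ^ k) ^ 2)) ^+ (2 ^ l))
    + (z ^+ ((2 ^ k) ^ 2) + z) * ((z ^+ ((2 ^ k) ^ 2)) ^+ (2 ^ l) + z ^+ (2 ^ l))).
  by rewrite RQ // !QQ' !frob2.
have hr := Rz x; rewrite hX hY -Rz in hr.
have Mpos : (0 < 2 ^ M)%N by rewrite expn_gt0.
have coM : coprime (2 ^ l' + 1) (2 ^ M).-1 by rewrite /coprime gcdnC -subn1 hgM.
have Q'pos : (0 < 2 ^ l' + 1)%N by rewrite addn1.
have [ha hb] := pow_inj Mpos coM Q'pos (RM _) (RM _) hr.
have hsE (z : F) : E z (z ^+ (2 ^ k)) (z ^+ ((2 ^ k) ^ 2)) (z ^+ (2 ^ l))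
                 ((z ^+ (2 ^ k)) ^+ (2 ^ l)) ((z ^+ ((2 ^ k) ^ 2)) ^+ (2 ^ l)) =
   (z + z ^+ (2 ^ k) + z ^+ ((2 ^ k) ^ 2)) ^+ (2 ^ l + 1) +
   U (z ^+ (2 ^ k) + z ^+ ((2 ^ k) ^ 2)) (z ^+ ((2 ^ k) ^ 2) + z)
     ((z ^+ (2 ^ k) + z ^+ ((2 ^ k) ^ 2)) ^+ (2 ^ l)) ((z ^+ ((2 ^ k) ^ 2) + z) ^+ (2 ^ l)).
  rewrite hs; congr (_ + _); last by rewrite !frob2.
  by rewrite addn1 exprSr mulrC !frob2.
rewrite !hsE ha hb in exx'; move/addIr: exx' => hs'.
have sq (z : F) : (z + z ^+ (2 ^ k) + z ^+ ((2 ^ k) ^ 2)) ^+ (2 ^ k) =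
    z + z ^+ (2 ^ k) + z ^+ ((2 ^ k) ^ 2).
  by rewrite !frob2 // s1 s2 addrC addrA.
have qpos : (0 < 2 ^ k)%N by rewrite expn_gt0.
have coq : coprime (2 ^ l + 1) (2 ^ k).-1 by rewrite /coprime gcdnC -subn1 hg.
have Qpos : (0 < 2 ^ l + 1)%N by rewrite addn1.
have hss := pow_inj qpos coq Qpos (sq x) (sq x') hs'.
have xsa (z : F) : z = (z + z ^+ (2 ^ k) + z ^+ ((2 ^ k) ^ 2)) + (z ^+ (2 ^ k) + z ^+ ((2 ^ k) ^ 2)).
  by apply: (c2eq h2 (W := - (z ^+ (2 ^ k) + z ^+ ((2 ^ k) ^ 2)))); ring.
by rewrite (xsa x) (xsa x') hss ha.
Qed.

Lemma perm_of (F : finFieldType) (k l : nat) (f : {poly F}) (E : F -> F -> F -> F -> F -> F -> F)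
    (U : F -> F -> F -> F -> F) :
  (0 < k)%N -> #|F| = ((2 ^ k) ^ 3)%N -> gcdn (2 ^ k - 1) (2 ^ l + 1) = 1%N ->
  1 + 1 = 0 :> F ->
  (forall x : F, f.[x] = E x (x ^+ (2 ^ k)) (x ^+ ((2 ^ k) ^ 2)) (x ^+ (2 ^ l))
                 ((x ^+ (2 ^ k)) ^+ (2 ^ l)) ((x ^+ ((2 ^ k) ^ 2)) ^+ (2 ^ l))) ->
  (forall x0 x1 x2 y0 y1 y2, E x0 x1 x2 y0 y1 y2 =
     (x0 + x1 + x2) * (y0 + y1 + y2) + U (x1 + x2) (x2 + x0) (y1 + y2) (y2 + y0)) ->
  (forall n x0 x1 x2 y0 y1 y2, (E x0 x1 x2 y0 y1 y2) ^+ (2 ^ n) =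
     E (x0 ^+ (2 ^ n)) (x1 ^+ (2 ^ n)) (x2 ^+ (2 ^ n))
       (y0 ^+ (2 ^ n)) (y1 ^+ (2 ^ n)) (y2 ^+ (2 ^ n))) ->
  (forall x0 x1 x2 y0 y1 y2 x0' x1' x2' y0' y1' y2',
     E x0 x1 x2 y0 y1 y2 = E x0' x1' x2' y0' y1' y2' ->
     E x1 x2 x0 y1 y2 y0 = E x1' x2' x0' y1' y2' y0' ->
     E x2 x0 x1 y2 y0 y1 = E x2' x0' x1' y2' y0' y1' ->
     (x1 + x2) * (y1 + y2) + (x2 + x0) * (y2 + y0) =
       (x1' + x2') * (y1' + y2') + (x2' + x0') * (y2' + y0') /\
     (x1 + x2) * (y2 + y0) + (x2 + x0) * (y1 + y2) + (x2 + x0) * (y2 + y0) =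
       (x1' + x2') * (y2' + y0') + (x2' + x0') * (y1' + y2') + (x2' + x0') * (y2' + y0')) ->
  permutes f.
Proof.
move=> k0 cF hg h2 hf hs hE hXY; apply: injF_bij => x y /=; rewrite !hf.
exact: core k0 cF hg h2 hs hE hXY x y.
Qed.

Definition E1 (F : fieldType) (x0 x1 x2 y0 y1 y2 : F) := y2 * x1 + y1 * x2 + y0 * x0.
Definition E2 (F : fieldType) (x0 x1 x2 y0 y1 y2 : F) :=
  y2 * x0 + y1 * x0 + y0 * x2 + y0 * x1 + y0 * x0.
Definition E3 (F : fieldType) (x0 x1 x2 y0 y1 y2 : F) :=
  y2 * x1 + y1 * x1 + y0 * x2 + y0 * x1 + y0 * x0.
Definition E4 (F : fieldType) (x0 x1 x2 y0 y1 y2 : F) :=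
  y2 * x2 + y1 * x2 + y0 * x2 + y0 * x1 + y0 * x0.
Definition U1 (F : fieldType) (a b c d : F) := a * c + a * d + b * c.
Definition U2 (F : fieldType) (a b c d : F) := a * c.
Definition U3 (F : fieldType) (a b c d : F) := b * c.
Definition U4 (F : fieldType) (a b c d : F) := a * c + b * c.

Lemma char2F (F : finFieldType) (k : nat) : #|F| = ((2 ^ k) ^ 3)%N -> 1 + 1 = 0 :> F.
Proof.
move=> cF; have : 2 \in [pchar F] by apply: (card_finPcharP (n := (k * 3)%N)); rewrite // expnM.
by move=> /pcharf0; rewrite -mulr2n.
Qed.

Lemma perm_f1 (F : finFieldType) (k l : nat) : (0 < k)%N -> #|F| = ((2 ^ k) ^ 3)%N ->
  gcdn (2 ^ k - 1) (2 ^ l + 1) = 1%N -> permutes (f1 F (2 ^ k) (2 ^ l)).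
Proof.
move=> k0 cF hg; have h2 := char2F cF.
apply: (perm_of (E := @E1 F) (U := @U1 F) k0 cF hg h2).
- by move=> x; rewrite /f1 /E1 !hornerE !exprD !exprM expr1.
- move=> x0 x1 x2 y0 y1 y2; rewrite /E1 /U1.
  by apply: (c2eq h2 (W := - (x0 * y1) - (x0 * y2) - (x1 * y0) - (x1 * y1) - (x1 * y2) - (x2 * y0) - (x2 * y1) - (2%:R * (x2 * y2)))); ring.
- by move=> n *; rewrite /E1 !(frob2 h2) !exprMn.
move=> x0 x1 x2 y0 y1 y2 x0' x1' x2' y0' y1' y2' e0 e1 e2.
have iX (a0 a1 a2 b0 b1 b2 : F) : (a1 + a2) * (b1 + b2) + (a2 + a0) * (b2 + b0) =
    E1 a0 a1 a2 b0 b1 b2 + E1 a1 a2 a0 b1 b2 b0.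
  by rewrite /E1; apply: (c2eq h2 (W := (a2 * b2))); ring.
have iY (a0 a1 a2 b0 b1 b2 : F) : (a1 + a2) * (b2 + b0) + (a2 + a0) * (b1 + b2) + (a2 + a0) * (b2 + b0) =
    E1 a0 a1 a2 b0 b1 b2 + E1 a2 a0 a1 b2 b0 b1.
  by rewrite /E1; apply: (c2eq h2 (W := (a0 * b2) + (a2 * b0) + (a2 * b2))); ring.
by rewrite !iX !iY e0 e1 e2.
Qed.

Lemma perm_f2 (F : finFieldType) (k l : nat) : (0 < k)%N -> #|F| = ((2 ^ k) ^ 3)%N ->
  gcdn (2 ^ k - 1) (2 ^ l + 1) = 1%N -> permutes (f2 F (2 ^ k) (2 ^ l)).
Proof.
move=> k0 cF hg; have h2 := char2F cF.
apply: (perm_of (E := @E2 F) (U := @U2 F) k0 cF hg h2).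
- by move=> x; rewrite /f2 /E2 !hornerE !exprD !exprM expr1 ?(oppc2 h2).
- move=> x0 x1 x2 y0 y1 y2; rewrite /E2 /U2.
  by apply: (c2eq h2 (W := - (x1 * y1) - (x1 * y2) - (x2 * y1) - (x2 * y2))); ring.
- by move=> n *; rewrite /E2 !(frob2 h2) !exprMn.
move=> x0 x1 x2 y0 y1 y2 x0' x1' x2' y0' y1' y2' e0 e1 e2.
have iX (a0 a1 a2 b0 b1 b2 : F) : (a1 + a2) * (b1 + b2) + (a2 + a0) * (b2 + b0) =
    (E2 a0 a1 a2 b0 b1 b2 + E2 a1 a2 a0 b1 b2 b0).
  by rewrite /E2; apply: (c2eq h2 (W := - (a0 * b1) - (a1 * b0) + (a2 * b2))); ring.
have iY (a0 a1 a2 b0 b1 b2 : F) : (a1 + a2) * (b2 + b0) + (a2 + a0) * (b1 + b2) + (a2 + a0) * (b2 + b0) =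
    (E2 a0 a1 a2 b0 b1 b2 + E2 a2 a0 a1 b2 b0 b1).
  by rewrite /E2; apply: (c2eq h2 (W := (a2 * b2))); ring.
by rewrite !iX !iY e0 e1 e2.
Qed.

Lemma perm_f3 (F : finFieldType) (k l : nat) : (0 < k)%N -> #|F| = ((2 ^ k) ^ 3)%N ->
  gcdn (2 ^ k - 1) (2 ^ l + 1) = 1%N -> permutes (f3 F (2 ^ k) (2 ^ l)).
Proof.
move=> k0 cF hg; have h2 := char2F cF.
apply: (perm_of (E := @E3 F) (U := @U3 F) k0 cF hg h2).
- by move=> x; rewrite /f3 /E3 !hornerE !exprD !exprM expr1 ?(oppc2 h2).
- move=> x0 x1 x2 y0 y1 y2; rewrite /E3 /U3.
  by apply: (c2eq h2 (W := - (x0 * y1) - (x0 * y2) - (x2 * y1) - (x2 * y2))); ring.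
- by move=> n *; rewrite /E3 !(frob2 h2) !exprMn.
move=> x0 x1 x2 y0 y1 y2 x0' x1' x2' y0' y1' y2' e0 e1 e2.
have iX (a0 a1 a2 b0 b1 b2 : F) : (a1 + a2) * (b1 + b2) + (a2 + a0) * (b2 + b0) =
    (E3 a0 a1 a2 b0 b1 b2 + E3 a1 a2 a0 b1 b2 b0) + (E3 a0 a1 a2 b0 b1 b2 + E3 a2 a0 a1 b2 b0 b1).
  by rewrite /E3; apply: (c2eq h2 (W := - (a0 * b0) - (a0 * b1) - (a1 * b0) - (a1 * b1) - (a1 * b2) - (a2 * b0))); ring.
have iY (a0 a1 a2 b0 b1 b2 : F) : (a1 + a2) * (b2 + b0) + (a2 + a0) * (b1 + b2) + (a2 + a0) * (b2 + b0) =
    (E3 a0 a1 a2 b0 b1 b2 + E3 a1 a2 a0 b1 b2 b0).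
  by rewrite /E3; apply: (c2eq h2 (W := (a0 * b2) - (a1 * b1) + (a2 * b2))); ring.
by rewrite !iX !iY e0 e1 e2.
Qed.

Lemma perm_f4 (F : finFieldType) (k l : nat) : (0 < k)%N -> #|F| = ((2 ^ k) ^ 3)%N ->
  gcdn (2 ^ k - 1) (2 ^ l + 1) = 1%N -> permutes (f4 F (2 ^ k) (2 ^ l)).
Proof.
move=> k0 cF hg; have h2 := char2F cF.
apply: (perm_of (E := @E4 F) (U := @U4 F) k0 cF hg h2).
- by move=> x; rewrite /f4 /E4 !hornerE !exprD !exprM expr1 ?(oppc2 h2).
- move=> x0 x1 x2 y0 y1 y2; rewrite /E4 /U4.
  by apply: (c2eq h2 (W := - (x0 * y1) - (x0 * y2) - (x1 * y1) - (x1 * y2) - (x2 * y1) - (x2 * y2))); ring.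
- by move=> n *; rewrite /E4 !(frob2 h2) !exprMn.
move=> x0 x1 x2 y0 y1 y2 x0' x1' x2' y0' y1' y2' e0 e1 e2.
have iX (a0 a1 a2 b0 b1 b2 : F) : (a1 + a2) * (b1 + b2) + (a2 + a0) * (b2 + b0) =
    (E4 a0 a1 a2 b0 b1 b2 + E4 a2 a0 a1 b2 b0 b1).
  by rewrite /E4; apply: (c2eq h2 (W := - (a1 * b0))); ring.
have iY (a0 a1 a2 b0 b1 b2 : F) : (a1 + a2) * (b2 + b0) + (a2 + a0) * (b1 + b2) + (a2 + a0) * (b2 + b0) =
    (E4 a0 a1 a2 b0 b1 b2 + E4 a1 a2 a0 b1 b2 b0) + (E4 a0 a1 a2 b0 b1 b2 + E4 a2 a0 a1 b2 b0 b1).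
  by rewrite /E4; apply: (c2eq h2 (W := - (a0 * b0) - (a1 * b0) - (a1 * b1) - (a2 * b1))); ring.
by rewrite !iX !iY e0 e1 e2.
Qed.

Lemma part1 (p k l : nat) : prime p -> (0 < k)%N ->
  (gcdn (p ^ k - 1) (p ^ l + 1) = 1%N <-> (p = 2%N /\ ord_le (ord2 k) (ord2 l))).
Proof.
move=> pp k0; case: (eqVneq p 2%N) => [-> | p2].
  rewrite /ord2 (negbTE (lt0n_neq0 k0)).
  have [->|l0] := posnP l.
    by split => // _; apply: gcd_pow2_1 _ _ _; [exact: k0 | left].
  rewrite /=; split.
    move=> hg; split => //; rewrite leqNgt; apply/negP => hlt.
    by move: (gcd_pow2_2 _ _ k0 l0 hlt); rewrite hg.
  by case=> _ h; apply: gcd_pow2_1 _ _ k0 _; right.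
have po : odd p.
  by case/boolP: (odd p) => // /(prime_oddPn pp) e; move: p2; rewrite e.
split => [hg | [/eqP]]; last by rewrite (negbTE p2).
have : (2 %| gcdn (p ^ k - 1) (p ^ l + 1))%N.
  rewrite dvdn_gcd !dvdn2 oddD oddX po orbT addbT /= oddB ?expn_gt0 ?prime_gt0 //.
  by rewrite oddX po orbT.
by rewrite hg.
Qed.

Lemma dvd_e (g q Q a b : nat) : (g %| Q + 1)%N -> a = 1 %[mod g] -> b = 1 %[mod g] ->
  (g %| a * Q + b)%N.
Proof.
move=> hQ ha hb; rewrite /dvdn -modnDm -modnMml ha hb modnMml mul1n modnDm.
by rewrite -/(dvdn _ _) hQ.
Qed.

Lemma dvd_e' (g Q b : nat) : (g %| Q + 1)%N -> b = 1 %[mod g] -> (g %| Q + b)%N.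
Proof. by move=> hQ hb; rewrite -(mul1n Q); apply: dvd_e. Qed.

Lemma nec (F : finFieldType) (q Q : nat) (f : {poly F}) : (1 < #|F|)%N ->
  (q - 1 %| #|F|.-1)%N ->
  (forall g (c : F), (g %| q - 1)%N -> (g %| Q + 1)%N -> c ^+ g = 1 -> f.[c] = f.[1]) ->
  permutes f -> gcdn (q - 1) (Q + 1) = 1%N.
Proof.
move=> F1 hqF hf hbij; case: (eqVneq (gcdn (q - 1) (Q + 1)) 1%N) => // hg1.
set g := gcdn (q - 1) (Q + 1) in hg1.
set N := #|F|.-1.
have gN : (g %| N)%N := dvdn_trans (dvdn_gcdl _ _) hqF.
have N0 : (0 < N)%N by rewrite /N -subn1 subn_gt0.
have hF : #|F| = N.+1 by rewrite /N prednK // (leq_trans _ F1).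
have : has N.-primitive_root (enum (predC1 (0 : F))).
  apply: cyclic.has_prim_root => //.
  - apply/allP => x; rewrite mem_enum /= => x0; rewrite unity_rootE.
    have := expf_card x; rewrite hF exprSr => h.
    by apply/eqP; apply: (mulIf x0); rewrite mul1r.
  - exact: enum_uniq.
  - by rewrite -cardE cardC1.
case/hasP => z _ zprim.
have cprim := dvdn_prim_root zprim gN.
have := hf g _ (dvdn_gcdl _ _) (dvdn_gcdr _ _) (prim_expr_order cprim).
move/(bij_inj hbij) => /= c1.
have := prim_order_dvd cprim 1; rewrite expr1 c1 eqxx dvdn1.
by move/eqP; move: hg1; rewrite /g => /eqP.
Qed.

Lemma nec_eval (F : finFieldType) (q Q g : nat) (c : F) : (0 < q)%N ->
  (g %| q - 1)%N -> (g %| Q + 1)%N -> c ^+ g = 1 ->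
  [/\ (f1 F q Q).[c] = (f1 F q Q).[1], (f2 F q Q).[c] = (f2 F q Q).[1],
      (f3 F q Q).[c] = (f3 F q Q).[1] & (f4 F q Q).[c] = (f4 F q Q).[1]].
Proof.
move=> q0 hq hQ hc.
have cexp e : (g %| e)%N -> c ^+ e = 1 by move/dvdnP => [m ->]; rewrite mulnC exprM hc expr1n.
have q1 : q = 1 %[mod g] by apply/eqP; rewrite eqn_mod_dvd.
have q2 : (q ^ 2 = 1 %[mod g])%N by rewrite -modnXm q1 modnXm exp1n.
split; rewrite /f1 /f2 /f3 /f4 !hornerE !expr1n !cexp //.
all: first [apply: dvd_e | apply: dvd_e'] => //.
Qed.

Local Close Scope ring_scope.

Theorem corollary1p2 (p k l : nat) (F : finFieldType) :
  prime p -> (0 < k)%N -> #|F| = (p ^ k) ^ 3 ->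
  let q := (p ^ k)%N in let Q := (p ^ l)%N in
  [/\ (gcdn (q - 1) (Q + 1) = 1%N <-> (p = 2%N /\ ord_le (ord2 k) (ord2 l))),
      (gcdn (q - 1) (Q + 1) = 1%N <-> permutes (f1 F q Q)),
      (gcdn (q - 1) (Q + 1) = 1%N <-> permutes (f2 F q Q)),
      (gcdn (q - 1) (Q + 1) = 1%N <-> permutes (f3 F q Q)) &
      (gcdn (q - 1) (Q + 1) = 1%N <-> permutes (f4 F q Q))].
Proof.
move=> pp k0 cF q Q.
have P1 := @part1 p k l pp k0.
have q0 : (0 < q)%N by rewrite expn_gt0 prime_gt0.
have q1 : (1 < q)%N by rewrite /q -(expn0 p) ltn_exp2l ?prime_gt1.
have F1 : (1 < #|F|)%N.
  by rewrite cF (ltn_trans q1) // -{1}(expn1 q) ltn_exp2l.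
have hqF : (q - 1 %| #|F|.-1)%N by rewrite cF -subn1 dvd_sub1.
have hsuf (f : {poly F}) :
   (forall g (c : F), (g %| q - 1)%N -> (g %| Q + 1)%N -> (c ^+ g = 1)%R -> (f.[c] = f.[1])%R) ->
   (p = 2%N -> #|F| = ((2 ^ k) ^ 3)%N -> gcdn (2 ^ k - 1) (2 ^ l + 1) = 1%N -> permutes f) ->
   (gcdn (q - 1) (Q + 1) = 1%N <-> permutes f).
  move=> hn hs; split => [hg | hp]; last exact: nec F1 hqF hn hp.
  have [p2 _] := proj1 P1 hg.
  by apply: hs => //; move: cF hg; rewrite /q /Q p2.
split.
- exact: P1.
- apply: hsuf; first by move=> g c hq hQ hc; case: (nec_eval q0 hq hQ hc).
  by move=> p2; rewrite /q /Q p2; apply: perm_f1.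
- apply: hsuf; first by move=> g c hq hQ hc; case: (nec_eval q0 hq hQ hc).
  by move=> p2; rewrite /q /Q p2; apply: perm_f2.
- apply: hsuf; first by move=> g c hq hQ hc; case: (nec_eval q0 hq hQ hc).
  by move=> p2; rewrite /q /Q p2; apply: perm_f3.
- apply: hsuf; first by move=> g c hq hQ hc; case: (nec_eval q0 hq hQ hc).
  by move=> p2; rewrite /q /Q p2; apply: perm_f4.
Qed.
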